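(* Let $n$ be even. Any quantum query algorithm that, given oracle access to $O_P$ for an arbitrary fixed-point-free involution $\sigma$ on $[n]$, outputs the single-bit descriptor of $\sigma$ with probability at least $\frac23$ must make $\Omega(n^{3/2})$ queries in the worst case.
   Context: A permutation $\sigma$ on $[n]$ is represented by its $n\times n$ permutation matrix $P$ with $P_{i,j}=1$ iff $\sigma(i)=j$, accessible only through the unitary $O_P:\lvert i,j,b\rangle\mapsto\lvert i,j,b\oplus P_{i,j}\rangle$. The single-bit descriptor of $\sigma$ is the string $z\in\{0,1\}^n$ with $z_i=\sigma(i)\bmod 2$. A fixed-point-free involution is a permutation $\sigma$ with $\sigma(\sigma(i))=i$ and $\sigma(i)\ne i$ for all $i$ (the $\mathsf{Descriptor}$ problem is computing the single-bit descriptor of such $\sigma$). *)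

(* Defs.v *)
From mathcomp Require Import all_boot all_order all_algebra all_fingroup.
From mathcomp Require Import complex Rstruct.
Set Implicit Arguments. Unset Strict Implicit. Unset Printing Implicit Defensive.
Import Order.TTheory GRing.Theory Num.Theory.
Local Open Scope ring_scope.

Definition RR : rcfType := Rdefinitions.R.
Definition CC : numClosedFieldType := RR[i].

Definition fpf_involution (n : nat) (s : 'S_n) : Prop :=
  forall i : 'I_n, s (s i) = i /\ s i <> i.

(* Permutation matrix entry P_{i,j} = 1 iff sigma(i) = j. *)
Definition perm_entry (n : nat) (s : 'S_n) (i j : 'I_n) : bool := s i == j.

(* Single-bit descriptor z_i = sigma(i) mod 2 (indices 0-based: [n] = {0,..,n-1}). *)
Definition descriptor (n : nat) (s : 'S_n) : {ffun 'I_n -> bool} :=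
  [ffun i => odd (s i)].

(* Computational basis of the algorithm's Hilbert space:
   query register |i, j, b> together with an m-dimensional workspace. *)
Definition basis (n m : nat) : finType := ('I_n * 'I_n * bool * 'I_m)%type.

Definition state (X : finType) := X -> CC.
Definition op (X : finType) := X -> X -> CC.

Definition apply_op (X : finType) (U : op X) (v : state X) : state X :=
  fun x => \sum_(y : X) U x y * v y.

Definition unitary (X : finType) (U : op X) : Prop :=
  (forall x y : X, \sum_(z : X) (U z x)^* * U z y = (x == y)%:R) /\
  (forall x y : X, \sum_(z : X) U x z * (U y z)^* = (x == y)%:R).

Definition normalized (X : finType) (v : state X) : Prop :=
  \sum_(x : X) `|v x| ^+ 2 = 1.

(* The oracle O_P : |i,j,b> |w> |-> |i,j,b xor P_{ij}> |w>, acting on a state. *)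
Definition oracle (n m : nat) (s : 'S_n) (v : state (basis n m)) : state (basis n m) :=
  fun x => let: (i, j, b, w) := x in v (i, j, b (+) perm_entry s i j, w).

Fixpoint run (X : finType) (U : nat -> op X) (O : state X -> state X)
    (k : nat) (psi0 : state X) : state X :=
  match k with
  | 0 => apply_op (U 0%N) psi0
  | k'.+1 => apply_op (U k) (O (run U O k' psi0))
  end.

Definition success_prob (n m : nat) (T : nat) (U : nat -> op (basis n m))
    (psi0 : state (basis n m)) (out : basis n m -> {ffun 'I_n -> bool})
    (s : 'S_n) : CC :=
  \sum_(x : basis n m | out x == descriptor s) `|run U (@oracle n m s) T psi0 x| ^+ 2.

(* Main.v *)
Require Import Defs.
From mathcomp Require Import all_boot all_order all_algebra all_fingroup.
From mathcomp Require Import complex Rstruct.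
From mathcomp Require Import ring lra zify.
Import Order.TTheory GRing.Theory Num.Theory.
Local Open Scope ring_scope.

Definition nr (z : CC) : RR := complex.Re (`|z| : RR[i]).

Lemma nrE (z : CC) : `|z| = (nr z)%:C%C.
Proof. by rewrite /nr RRe_real // ger0_real. Qed.

Lemma nr_ge0 z : 0 <= nr z.
Proof. by rewrite -(@ler0c RR) -nrE. Qed.

Lemma nr_tri (x y : CC) : nr (x + y) <= nr x + nr y.
Proof. by rewrite -(@lecR RR) rmorphD /= -!nrE ler_normD. Qed.

Lemma nrM (x y : CC) : nr (x * y) = nr x * nr y.
Proof. by apply: (@complexI RR); rewrite rmorphM /= -!nrE normrM. Qed.

Lemma nrJ (x : CC) : nr (x^*) = nr x.
Proof. by rewrite /nr norm_conjC. Qed.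

Lemma nrN (x : CC) : nr (- x) = nr x.
Proof. by rewrite /nr normrN. Qed.

Lemma nr_sum (I : finType) (P : pred I) (F : I -> CC) :
  nr (\sum_(i | P i) F i) <= \sum_(i | P i) nr (F i).
Proof.
rewrite -(@lecR RR) rmorph_sum /= -nrE.
by apply: le_trans (ler_norm_sum _ _ _) _; apply: ler_sum => i _; rewrite nrE.
Qed.

Lemma nr_sq (z : CC) : `|z| ^+ 2 = (nr z ^+ 2)%:C%C.
Proof. by rewrite nrE rmorphXn. Qed.

Set Implicit Arguments. Unset Strict Implicit. Unset Printing Implicit Defensive.

Definition ip (X : finType) (a b : state X) : CC := \sum_x (a x)^* * b x.

Lemma ip_unitary (X : finType) (U : op X) a b :
  unitary U -> ip (apply_op U a) (apply_op U b) = ip a b.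
Proof.
case=> HU _; rewrite /ip /apply_op.
under eq_bigr => x _ do rewrite rmorph_sum mulr_suml.
rewrite exchange_big /=.
apply: eq_bigr => y _.
under eq_bigr => x _ do rewrite mulr_sumr.
rewrite exchange_big /=.
rewrite (bigD1 y) //= [X in _ + X]big1 ?addr0.
  have := HU y y; rewrite eqxx /= => H1.
  have -> : (a y)^* * b y = (a y)^* * b y * \sum_z (U z y)^* * U z y by rewrite H1 mulr1.
  rewrite mulr_sumr; apply: eq_bigr => z _.
  by rewrite rmorphM /=; ring.
move=> z /negPf Hz.
have := HU y z; rewrite eq_sym Hz => H0.
transitivity ((a y)^* * b z * \sum_x (U x y)^* * U x z); last by rewrite H0 mulr0.
rewrite mulr_sumr; apply: eq_bigr => x _.
by rewrite rmorphM /=; ring.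
Qed.

Lemma ip_self (X : finType) (a : state X) :
  ip a a = ((\sum_x nr (a x) ^+ 2)%:C)%C.
Proof.
rewrite /ip rmorph_sum; apply: eq_bigr => x _.
by rewrite -normCKC nr_sq.
Qed.

Set Implicit Arguments. Unset Strict Implicit. Unset Printing Implicit Defensive.

Section Orc.
Variables n m : nat.
Local Notation X := (basis n m).

Definition piO (s : 'S_n) (x : X) : X :=
  let: (i, j, b, w) := x in (i, j, b (+) perm_entry s i j, w).
Definition qi (x : X) : 'I_n := x.1.1.1.
Definition qj (x : X) : 'I_n := x.1.1.2.

Lemma oracleE s v x : oracle s v x = v (piO s x).
Proof. by case: x => [[[i j] b] w]. Qed.

Lemma piK s : involutive (piO s).
Proof. by case=> [[[i j] b] w] /=; rewrite addbK. Qed.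

Lemma pi_inj s : injective (piO s).
Proof. exact: inv_inj (piK s). Qed.

Lemma qi_pi s x : qi (piO s x) = qi x.
Proof. by case: x => [[[i j] b] w]. Qed.
Lemma qj_pi s x : qj (piO s x) = qj x.
Proof. by case: x => [[[i j] b] w]. Qed.

Lemma ip_oracle s (a b : state X) : ip (oracle s a) (oracle s b) = ip a b.
Proof.
rewrite /ip [RHS](reindex_inj (@pi_inj s)) /=.
by apply: eq_bigr => x _; rewrite !oracleE.
Qed.

Definition dq (s s' : 'S_n) (x : X) : bool :=
  perm_entry s (qi x) (qj x) != perm_entry s' (qi x) (qj x).

Lemma reindex_pi s (P : pred X) (f : X -> RR) :
  (forall x, P (piO s x) = P x) ->
  \sum_(x | P x) f (piO s x) = \sum_(x | P x) f x.
Proof.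
move=> HP; rewrite [RHS](reindex_inj (@pi_inj s)) /=.
by apply: eq_bigl => x; rewrite HP.
Qed.

Lemma amgm2 (A B1 B2 t : RR) : 0 < t ->
  A * (B1 + B2) <= t * A ^+ 2 + (B1 ^+ 2 / t + B2 ^+ 2 / t) / 2.
Proof.
move=> t0.
have ht : t * t^-1 = 1 by rewrite mulfV // gt_eqF.
have hu : 0 < t^-1 by rewrite invr_gt0.
set u := t^-1 in ht hu *.
rewrite !expr2 /= -!mulrA -!/u.
have H : 0 <= u * ((t*A-B1)^+2 + (t*A-B2)^+2).
  by apply: mulr_ge0; [exact: ltW | apply: addr_ge0; exact: sqr_ge0].
have h1 : u*(t*(t*(A*A))) = t*(A*A) by rewrite -[RHS]mul1r -ht; ring.
have h2 : u*(t*(A*(B1+B2))) = A*(B1+B2) by rewrite -[RHS]mul1r -ht; ring.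
move: H; rewrite !expr2; move: h1 h2; nra.
Qed.

Lemma diff_bound s s' (a b : state X) (tau : X -> RR) :
  (forall x, 0 < tau x) ->
  (forall x, tau (piO s x) = tau x) -> (forall x, tau (piO s' x) = tau x) ->
  nr (ip (oracle s a) (oracle s' b) - ip a b) <=
  \sum_(x | dq s s' x) (tau x * nr (a x) ^+ 2 + nr (b x) ^+ 2 / tau x).
Proof.
move=> t0 ts ts'.
have dqs x : dq s s' (piO s x) = dq s s' x by rewrite /dq qi_pi qj_pi.
have dqs' x : dq s s' (piO s' x) = dq s s' x by rewrite /dq qi_pi qj_pi.
have -> : ip (oracle s a) (oracle s' b) - ip a b =
  \sum_(x | dq s s' x) (a (piO s x))^* * (b (piO s' x) - b (piO s x)).
  rewrite /ip [X in _ - X](reindex_inj (@pi_inj s)) /= -sumrB.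
  rewrite (bigID (dq s s')) /= [X in _ + X]big1 ?addr0.
    by apply: eq_bigr => x _; rewrite !oracleE mulrBr.
  move=> x; rewrite /dq negbK => /eqP He.
  rewrite !oracleE.
  have -> : piO s' x = piO s x.
    by case: x He => [[[i j] c] w] /= ->.
  by rewrite subrr.
apply: le_trans (nr_sum _ _ _) _.
apply: (le_trans (y := \sum_(x | dq s s' x)
   (tau x * nr (a (piO s x)) ^+ 2 +
     (nr (b (piO s' x)) ^+ 2 / tau (piO s' x) + nr (b (piO s x)) ^+ 2 / tau (piO s x)) / 2))).
  apply: ler_sum => x _; rewrite nrM nrJ ts ts'.
  apply: le_trans (amgm2 _ _ _ (t0 x)).
  apply: ler_wpM2l; first exact: nr_ge0.
  by apply: le_trans (nr_tri _ _) _; rewrite nrN.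
match goal with |- is_true (Order.le ?a ?b) => suff E : a = b by rewrite E end.
rewrite [LHS]big_split [RHS]big_split /=.
set h := fun y => nr (b y) ^+ 2 / tau y.
have E1 : \sum_(x | dq s s' x) tau x * nr (a (piO s x)) ^+ 2 =
          \sum_(x | dq s s' x) tau x * nr (a x) ^+ 2.
  transitivity (\sum_(x | dq s s' x) (fun y => tau y * nr (a y) ^+ 2) (piO s x)).
    by apply: eq_bigr => x _ /=; rewrite ts.
  exact: reindex_pi.
rewrite E1; congr (_ + _).
transitivity (\sum_(x | dq s s' x) (h (piO s' x) / 2 + h (piO s x) / 2)).
  by apply: eq_bigr => x _; rewrite /h mulrDl.
rewrite big_split /=.
rewrite (reindex_pi (fun y => h y / 2) (dqs')) (reindex_pi (fun y => h y / 2) dqs).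
rewrite -big_split; apply: eq_bigr => x _ /=; rewrite /h; move: (nr (b x) ^+ 2 / tau x) => r; lra.
Qed.
End Orc.

Set Implicit Arguments. Unset Strict Implicit. Unset Printing Implicit Defensive.

Local Close Scope ring_scope.
Section Comb.
Variable n : nat.

Definition fpfb (s : 'S_n) : bool := [forall i, (s (s i) == i) && (s i != i)].

Lemma fpfP s : reflect (fpf_involution s) (fpfb s).
Proof.
apply: (iffP forallP) => H i.
  by case/andP: (H i) => /eqP -> /eqP.
by case: (H i) => -> /eqP ->; rewrite eqxx.
Qed.

Definition cj (p : 'I_n * 'I_n) (s : 'S_n) : 'S_n :=
  (tperm p.1 p.2 * s * tperm p.1 p.2)%g.

Lemma cjE p s x : cj p s x = tperm p.1 p.2 (s (tperm p.1 p.2 x)).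
Proof. by rewrite /cj !permM. Qed.

Lemma cjK p : involutive (cj p).
Proof.
move=> s; apply/permP => x; rewrite !cjE !tpermK; done.
Qed.

Lemma fpf_cj1 p s : fpfb s -> fpfb (cj p s).
Proof.
move/fpfP => H; apply/fpfP => i; rewrite !cjE tpermK; split.
  by case: (H (tperm p.1 p.2 i)) => -> _; rewrite tpermK.
move=> E; case: (H (tperm p.1 p.2 i)) => _; apply.
by have := congr1 (tperm p.1 p.2) E; rewrite tpermK.
Qed.

Lemma fpf_cj p s : fpfb (cj p s) = fpfb s.
Proof.
apply/idP/idP; last exact: fpf_cj1.
by move/(fpf_cj1 p); rewrite cjK.
Qed.

Definition G (s : 'S_n) (p : 'I_n * 'I_n) : bool :=
  (odd p.1 != odd p.2) && (s p.1 != p.2).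

Lemma G_cj p s : fpfb s -> G (cj p s) p = G s p.
Proof.
move/fpfP => H; rewrite /G cjE tpermL; congr (_ && _).
case: p => b c /=.
case: (H c) => Hcc Hc.
case: (H b) => Hbb Hb.
apply/idP/idP; apply: contra => /eqP E.
  by rewrite -E Hbb tpermL.
have := congr1 (tperm b c) E; rewrite tpermK tpermR => Esc.
by rewrite -Esc Hcc.
Qed.

Lemma desc_cj p s : fpfb s -> G s p -> descriptor (cj p s) != descriptor s.
Proof.
move/fpfP => H /andP [Hodd Hsb].
case: p Hodd Hsb => b c /= Hodd Hsb.
apply/eqP => /ffunP /(_ (s b)); rewrite !ffunE cjE /=.
case: (H b) => Hbb Hb.
have h1 : b != s b by rewrite eq_sym; apply/eqP.
have h2 : c != s b by rewrite eq_sym.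
rewrite (tpermD h1 h2) Hbb tpermL => E.
by move: Hodd; rewrite E eqxx.
Qed.

Lemma cj_hit (s : 'S_n) (b c i j : 'I_n) : fpf_involution s -> s i != j ->
  tperm b c (s (tperm b c i)) = j ->
  [|| (b, c) == (i, s j), (b, c) == (s j, i), (b, c) == (j, s i) | (b, c) == (s i, j)].
Proof.
move=> H Hij E.
have E' : s (tperm b c i) = tperm b c j by rewrite -E tpermK.
move: E'; clear E.
have Hss x : s (s x) = x by case: (H x).
have Hfp x : s x <> x by case: (H x).
case: (tpermP b c i) => [Hi|Hi|Hi1 Hi2]; case: (tpermP b c j) => [Hj|Hj|Hj1 Hj2] E'.
- by case: (Hfp c).
- by move: Hij; rewrite Hi Hj -E' Hss eqxx.
- by apply/or4P; apply: Or41; rewrite Hi -E' Hss.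
- by move: Hij; rewrite Hi Hj -E' Hss eqxx.
- by case: (Hfp b).
- by apply/or4P; apply: Or42; rewrite Hi -E' Hss.
- by apply/or4P; apply: Or43; rewrite Hj E'.
- by apply/or4P; apply: Or44; rewrite Hj E'.
- by move: Hij; rewrite E' eqxx.
Qed.

Lemma sum_eq1 (T : finType) (a : T) : \sum_(x : T) (x == a : nat) = 1.
Proof. by rewrite (bigD1 a) //= eqxx big1 // => y /negPf ->. Qed.

Lemma sum_fst (i : 'I_n) : \sum_(p : 'I_n * 'I_n) (p.1 == i : nat) = n.
Proof.
rewrite -(pair_big xpredT xpredT (fun b c : 'I_n => (b == i : nat))) /=.
under eq_bigr => b _ do rewrite sum_nat_const card_ord.
by rewrite -big_distrr /= sum_eq1 muln1.
Qed.

Lemma sum_snd (i : 'I_n) : \sum_(p : 'I_n * 'I_n) (p.2 == i : nat) = n.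
Proof.
rewrite -(pair_big xpredT xpredT (fun b c : 'I_n => (c == i : nat))) /=.
under eq_bigr => b _ do rewrite sum_eq1.
by rewrite sum1_card card_ord.
Qed.

Lemma cnt1 (s : 'S_n) (i j : 'I_n) : fpfb s -> s i = j ->
  \sum_(p | (s i == j) != (cj p s i == j)) 1 <= 4 * n.
Proof.
move=> _ Hij.
apply: (@leq_trans (\sum_(p : 'I_n * 'I_n)
   ((p.1 == i) + (p.1 == j) + (p.2 == i) + (p.2 == j)))).
  rewrite big_mkcond /=; apply: leq_sum => p _.
  case: ifP => // HP.
  rewrite !addn_gt0 !lt0b.
  apply: contraLR HP; rewrite !negb_or => /andP [/andP [/andP [h1 h2] h3] h4].
  by rewrite cjE Hij (tpermD h1 h3) Hij (tpermD h2 h4) eqxx.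
by rewrite !big_split /= !sum_fst !sum_snd; lia.
Qed.

Lemma cnt0 (s : 'S_n) (i j : 'I_n) : fpfb s -> s i != j ->
  \sum_(p | (s i == j) != (cj p s i == j)) 1 <= 4.
Proof.
move=> /fpfP H Hij.
apply: (@leq_trans (\sum_(p : 'I_n * 'I_n)
   ((p == (i, s j)) + (p == (s j, i)) + (p == (j, s i)) + (p == (s i, j))))).
  rewrite big_mkcond /=; apply: leq_sum => [[b c]] _.
  case: ifP => // HP.
  rewrite !addn_gt0 !lt0b.
  move: HP; rewrite (negPf Hij) /= cjE /= => /eqP E.
  have {}E : tperm b c (s (tperm b c i)) = j by apply/eqP; move: E; case: (_ == j).
  by have := cj_hit H Hij E; rewrite !orbA.
by rewrite !big_split /= !sum_eq1.
Qed.

Lemma odd_count k (bt : bool) : n = k.*2 -> \sum_(c < n) (odd c == bt : nat) = k.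
Proof.
move=> ->; elim: k => [|k IH]; first by rewrite big_ord0.
move: IH.
rewrite doubleS !big_ord_recr /= odd_double /= => ->.
by case: bt => /=; rewrite ?addn0 ?addn1.
Qed.

Lemma Gcount (s : 'S_n) k : n = k.*2 -> fpfb s -> n * k - n <= \sum_(p | G s p) 1.
Proof.
move=> Hn _.
have A : \sum_(p : 'I_n * 'I_n) (odd p.1 != odd p.2 : nat) <=
         \sum_(p | G s p) 1 + \sum_(p : 'I_n * 'I_n) (s p.1 == p.2 : nat).
  rewrite [X in _ <= X + _]big_mkcond -big_split; apply: leq_sum => p _ /=; rewrite /G.
  by case: (odd p.1 != odd p.2); case: (s p.1 == p.2).
have B : \sum_(p : 'I_n * 'I_n) (s p.1 == p.2 : nat) = n.
  rewrite -(pair_big xpredT xpredT (fun b c : 'I_n => (s b == c : nat))) /=.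
  under eq_bigr => b _ do under eq_bigr => c _ do rewrite eq_sym.
  under eq_bigr => b _ do rewrite sum_eq1.
  by rewrite sum1_card card_ord.
have C : \sum_(p : 'I_n * 'I_n) (odd p.1 != odd p.2 : nat) = n * k.
  rewrite -(pair_big xpredT xpredT (fun b c : 'I_n => (odd b != odd c : nat))) /=.
  transitivity (\sum_(b < n) k); last by rewrite sum_nat_const card_ord.
  apply: eq_bigr => b _.
  rewrite -(odd_count (~~ odd b) Hn); apply: eq_bigr => c _.
  by case: (odd b); case: (odd c).
lia.
Qed.

Lemma fpf_exists k : n = k.*2 -> (0 < k)%N -> exists s, fpfb s.
Proof.
move=> Hn k0.
pose f (i : 'I_n) : 'I_n := insubd i (if odd i then i.-1 else i.+1).
have fval i : val (f i) = if odd i then i.-1 else i.+1.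
  rewrite val_insubd; case: ifP => // /negbT; case: ifP => Ho.
    by rewrite -ltnNge => /(leq_trans (ltn_ord i)); rewrite ltnNge leq_pred.
  move=> Hlt; have Hi : (nat_of_ord i < k.*2)%N by rewrite -Hn ltn_ord.
  have Hd := odd_double_half i; rewrite Ho add0n in Hd.
  have Hlt' : ~~ ((nat_of_ord i).+1 < k.*2)%N by rewrite -Hn.
  rewrite -!muln2 in Hd Hi Hlt'; lia.
have fK : involutive f.
  move=> i; apply: val_inj; rewrite !fval.
  case Ho: (odd i).
    move: (odd_double_half i); rewrite Ho -muln2 => Hd.
    have E1 : (nat_of_ord i).-1 = i./2 * 2 by move: Hd => /=; lia.
    rewrite E1 oddM andbF /=; lia.
  by rewrite /= Ho.
have fD i : f i != i.
  apply/eqP => /(congr1 val); rewrite fval; case Ho: (odd i) => E.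
    have : (0 < nat_of_ord i)%N by move: Ho; case: (nat_of_ord i).
    move: E => /=; lia.
  move: E => /=; lia.
exists (perm (can_inj fK)); apply/forallP => i; rewrite !permE fK eqxx /=.
exact: fD.
Qed.
End Comb.
Local Open Scope ring_scope.

Set Implicit Arguments. Unset Strict Implicit. Unset Printing Implicit Defensive.

Lemma eqle (x y : RR) : x = y -> x <= y.
Proof. by move=> ->. Qed.

Section Main.
Variables n m T : nat.
Variable U : nat -> op (basis n m).
Variable psi0 : state (basis n m).
Variable out : basis n m -> {ffun 'I_n -> bool}.
Hypothesis HU : forall k, (k <= T)%N -> unitary (U k).
Hypothesis Hpsi : normalized psi0.

Definition psi (s : 'S_n) k := run U (@oracle n m s) k psi0.

Lemma ip_psi0 : ip psi0 psi0 = 1.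
Proof.
rewrite ip_self; move: Hpsi; rewrite /normalized.
under eq_bigr => x _ do rewrite nr_sq.
by rewrite -rmorph_sum.
Qed.

Lemma psiS s k : psi s k.+1 = apply_op (U k.+1) (oracle s (psi s k)).
Proof. by []. Qed.

Lemma psi_0 s : psi s 0 = apply_op (U 0) psi0.
Proof. by []. Qed.

Lemma ip_psi_self s k : (k <= T)%N -> ip (psi s k) (psi s k) = 1.
Proof.
elim: k => [|k IH] Hk.
  by rewrite psi_0 ip_unitary ?ip_psi0 //; apply: HU.
rewrite psiS ip_unitary; last exact: HU.
by rewrite ip_oracle IH // ltnW.
Qed.

Lemma norm_psi s k : (k <= T)%N -> \sum_x nr (psi s k x) ^+ 2 = 1.
Proof.
move=> Hk; apply: (@complexI RR); rewrite -ip_self ip_psi_self //.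
Qed.

Hypothesis Hn0 : (0 < n)%N.

Definition tau (s : 'S_n) (x : basis n m) : RR :=
  if perm_entry s (qi x) (qj x) then (Num.sqrt (n%:R))^-1 else Num.sqrt (n%:R).

Lemma sqrtn_gt0 : 0 < Num.sqrt (n%:R : RR).
Proof. by rewrite sqrtr_gt0 ltr0n. Qed.

Lemma tau_gt0 s x : 0 < tau s x.
Proof. by rewrite /tau; case: ifP => _; rewrite ?invr_gt0 sqrtn_gt0. Qed.

Lemma tau_pi s s' x : tau s (piO s' x) = tau s x.
Proof. by rewrite /tau qi_pi qj_pi. Qed.

Lemma step s s' k : (k < T)%N ->
  nr (ip (psi s k) (psi s' k)) - nr (ip (psi s k.+1) (psi s' k.+1)) <=
  \sum_(x | dq s s' x) (tau s x * nr (psi s k x) ^+ 2 + tau s' x * nr (psi s' k x) ^+ 2).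
Proof.
move=> Hk; rewrite !psiS ip_unitary; last exact: HU.
set A := ip (psi s k) (psi s' k).
set B := ip (oracle s (psi s k)) (oracle s' (psi s' k)).
have H1 : nr A <= nr B + nr (B - A).
  by have := nr_tri B (A - B); rewrite addrC subrK -opprB nrN.
have H2 := diff_bound (psi s k) (psi s' k) (tau_gt0 s) (tau_pi s s) (tau_pi s s').
apply: le_trans (_ : nr (B - A) <= _); first by rewrite lerBlDl.
apply: le_trans H2 _; apply: ler_sum => x Hx; rewrite lerD2l.
move: Hx; rewrite /dq /tau.
case: (perm_entry s _ _); case: (perm_entry s' _ _) => //= _.
  by rewrite invrK mulrC.
by rewrite mulrC.
Qed.

Hypothesis Hsucc : forall s : 'S_n, fpf_involution s ->
       2%:R / 3%:R <= success_prob T U psi0 out s.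

Lemma succR s : fpf_involution s ->
  2 / 3 <= \sum_(x | out x == descriptor s) nr (psi s T x) ^+ 2.
Proof.
move=> H; have := Hsucc H; rewrite /success_prob.
under eq_bigr => x _ do rewrite nr_sq.
rewrite -rmorph_sum.
have -> : (2%:R / 3%:R : CC) = ((2%:R / 3%:R : RR)%:C)%C.
  by rewrite fmorph_div /= !rmorph_nat.
by rewrite lecR.
Qed.

Lemma amgm34 (x y : RR) : 0 <= x -> 0 <= y -> x * y <= (3/4 * x ^+ 2 + 4/3 * y ^+ 2) / 2.
Proof.
move=> hx hy; have := sqr_ge0 (3 * x - 4 * y); rewrite !expr2; nra.
Qed.

Lemma lin_sum (I : finType) (P : pred I) (u v : I -> RR) c1 c2 :
  \sum_(x | P x) (c1 * u x + c2 * v x) / 2 =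
  (c1 * \sum_(x | P x) u x + c2 * \sum_(x | P x) v x) / 2.
Proof. by rewrite -mulr_suml big_split /= -!mulr_sumr. Qed.

Lemma sum_sub (I : finType) (P Q : pred I) (f : I -> RR) :
  (forall x, P x -> Q x) -> (forall x, 0 <= f x) ->
  \sum_(x | P x) f x <= \sum_(x | Q x) f x.
Proof.
move=> PQ f0; rewrite [X in X <= _]big_mkcond [X in _ <= X]big_mkcond.
apply: ler_sum => x _; case: ifP => Px; first by rewrite PQ.
by case: ifP.
Qed.

Lemma final s p : fpfb s -> G s p ->
  nr (ip (psi s T) (psi (cj p s) T)) <= 17 / 18.
Proof.
move=> Fs Gsp.
have Fs' : fpfb (cj p s) by rewrite fpf_cj.
have Hd := desc_cj Fs Gsp.
set s' := cj p s in Fs' Hd *.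
set a := psi s T; set b := psi s' T.
have Ha : \sum_x nr (a x) ^+ 2 = 1 by exact: norm_psi.
have Hb : \sum_x nr (b x) ^+ 2 = 1 by exact: norm_psi.
have Sa := succR (elimT (fpfP s) Fs).
have Sb := succR (elimT (fpfP s') Fs').
set P := fun x => out x == descriptor s.
have Sb' : \sum_(x | out x == descriptor s') nr (b x) ^+ 2 <=
           \sum_(x | ~~ P x) nr (b x) ^+ 2.
  apply: sum_sub => [x /eqP Ex|x]; last exact: sqr_ge0.
  by rewrite /P Ex.
rewrite (bigID P) /= in Ha; rewrite (bigID P) /= in Hb.
have H1 : nr (ip a b) <= \sum_x nr (a x) * nr (b x).
  apply: le_trans (nr_sum _ _ _) _.
  by apply: ler_sum => x _; rewrite nrM nrJ.
rewrite (bigID P) /= in H1.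
have H2 : \sum_(x | P x) nr (a x) * nr (b x) <=
   (3/4 * \sum_(x | P x) nr (a x) ^+ 2 + 4/3 * \sum_(x | P x) nr (b x) ^+ 2) / 2.
  rewrite -lin_sum; apply: ler_sum => x _; apply: amgm34; exact: nr_ge0.
have H3 : \sum_(x | ~~ P x) nr (a x) * nr (b x) <=
   (4/3 * \sum_(x | ~~ P x) nr (a x) ^+ 2 + 3/4 * \sum_(x | ~~ P x) nr (b x) ^+ 2) / 2.
  rewrite -lin_sum; apply: ler_sum => x _; rewrite mulrC addrC; apply: amgm34; exact: nr_ge0.
have Sa0 : 0 <= \sum_(x | ~~ P x) nr (a x) ^+ 2 by apply: sumr_ge0 => x _; exact: sqr_ge0.
have Sb0 : 0 <= \sum_(x | P x) nr (b x) ^+ 2 by apply: sumr_ge0 => x _; exact: sqr_ge0.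
move: Sa Sb Sb' Ha Hb H1 H2 H3 Sa0 Sb0.
rewrite -/P.
set X1 := \sum_(x | P x) nr (a x) ^+ 2.
set X2 := \sum_(x | ~~ P x) nr (a x) ^+ 2.
set Y1 := \sum_(x | P x) nr (b x) ^+ 2.
set Y2 := \sum_(x | ~~ P x) nr (b x) ^+ 2.
move=> *; lra.
Qed.

Definition Ik k (s s' : 'S_n) := nr (ip (psi s k) (psi s' k)).
Definition S k := \sum_(s | fpfb s) \sum_(p | G s p) Ik k s (cj p s).
Definition Rsz : RR := \sum_(s : 'S_n | fpfb s) \sum_(p | G s p) 1.
Definition Fc : RR := \sum_(s : 'S_n | fpfb s) 1.

Lemma S0 : S 0 = Rsz.
Proof.
apply: eq_bigr => s _; apply: eq_bigr => p _.
rewrite /Ik !psi_0 ip_unitary ?ip_psi0; last exact: HU.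
by rewrite /nr normr1.
Qed.

Lemma ST : S T <= 17 / 18 * Rsz.
Proof.
rewrite /Rsz mulr_sumr; apply: ler_sum => s Fs.
rewrite mulr_sumr; apply: ler_sum => p Gp.
by rewrite mulr1; apply: final.
Qed.

Lemma dbl (Y : 'S_n -> 'I_n * 'I_n -> RR) :
  \sum_(s : 'S_n | fpfb s) \sum_(p | G s p) Y s p =
  \sum_p \sum_(s : 'S_n) (if fpfb s && G s p then Y s p else 0).
Proof.
rewrite exchange_big /= big_mkcond /=; apply: eq_bigr => s _.
case: (fpfb s) => /=; first by rewrite big_mkcond.
by rewrite big1.
Qed.

Lemma GF_cj (p : 'I_n * 'I_n) (s : 'S_n) : (fpfb (cj p s) && G (cj p s) p) = (fpfb s && G s p).
Proof.
case Fs: (fpfb s); last by rewrite fpf_cj Fs.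
by rewrite fpf_cj Fs G_cj.
Qed.

Lemma sym_sum (K : 'S_n -> 'S_n -> 'I_n * 'I_n -> RR) :
  \sum_(s : 'S_n | fpfb s) \sum_(p | G s p) K s (cj p s) p =
  \sum_(s : 'S_n | fpfb s) \sum_(p | G s p) K (cj p s) s p.
Proof.
rewrite !dbl; apply: eq_bigr => p _.
rewrite (reindex_inj (can_inj (cjK p))) /=.
by apply: eq_bigr => s _; rewrite GF_cj cjK.
Qed.

Definition g k (u : 'S_n) (x : basis n m) : RR := tau u x * nr (psi u k x) ^+ 2.

Lemma g_ge0 k u x : 0 <= g k u x.
Proof. by apply: mulr_ge0; [apply: ltW; apply: tau_gt0 | apply: sqr_ge0]. Qed.

Lemma pt_bound k (s : 'S_n) x : fpfb s ->
  g k s x * \sum_(p | dq s (cj p s) x) 1 <= 4 * Num.sqrt (n%:R) * nr (psi s k x) ^+ 2.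
Proof.
move=> Fs.
have -> : \sum_(p | dq s (cj p s) x) (1 : RR) =
          (\sum_(p | (s (qi x) == qj x) != (cj p s (qi x) == qj x)) 1)%N%:R.
  by rewrite natr_sum.
have r0 := sqrtn_gt0.
have rn : Num.sqrt (n%:R : RR) ^+ 2 = n%:R by rewrite sqr_sqrtr // ler0n.
set r := Num.sqrt (n%:R : RR) in r0 rn *.
set A := nr (psi s k x) ^+ 2.
have A0 : 0 <= A by exact: sqr_ge0.
rewrite /g /tau -/r -/A /perm_entry.
case: eqP => Hij.
  have := cnt1 Fs Hij; rewrite -(ler_nat RR) => Hc.
  apply: le_trans (_ : r^-1 * A * (4 * n)%N%:R <= _).
    apply: ler_wpM2l; last by move: Hc; rewrite Hij eqxx.
    apply: mulr_ge0 => //; apply: ltW; rewrite invr_gt0 //.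
  have rnz : r != 0 by rewrite gt_eqF.
  rewrite natrM -rn.
  suff -> : r^-1 * A * (4%:R * r ^+ 2) = 4 * r * A by [].
  by field.
have := cnt0 Fs (introN eqP Hij); rewrite -(ler_nat RR) => Hc.
apply: le_trans (_ : r * A * 4%:R <= _).
  apply: ler_wpM2l; last by move: Hc; rewrite (negPf (introN eqP Hij)).
  apply: mulr_ge0 => //; apply: ltW => //.
by rewrite mulrC mulrA.
Qed.

Lemma Qs k (s : 'S_n) : fpfb s -> (k <= T)%N ->
  \sum_(p | G s p) \sum_(x | dq s (cj p s) x) g k s x <= 4 * Num.sqrt (n%:R).
Proof.
move=> Fs Hk.
apply: (le_trans (y := \sum_p \sum_(x | dq s (cj p s) x) g k s x)).
  apply: sum_sub => // p; apply: sumr_ge0 => x _; exact: g_ge0.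
rewrite (exchange_big_dep xpredT) //=.
apply: (le_trans (y := \sum_x 4 * Num.sqrt (n%:R) * nr (psi s k x) ^+ 2)).
  apply: ler_sum => x _; apply: le_trans (pt_bound k x Fs).
  by rewrite mulr_sumr; apply: eqle; apply: eq_bigr => p _; rewrite mulr1.
by rewrite -mulr_sumr norm_psi // mulr1.
Qed.

Lemma dq_sym (u v : 'S_n) (x : basis n m) : dq u v x = dq v u x.
Proof. by rewrite /dq eq_sym. Qed.

Lemma Qall k : (k <= T)%N ->
  \sum_(s : 'S_n | fpfb s) \sum_(p | G s p) \sum_(x | dq s (cj p s) x) g k s x
  <= 4 * Num.sqrt (n%:R) * Fc.
Proof.
move=> Hk; rewrite /Fc mulr_sumr; apply: ler_sum => s Fs.
by rewrite mulr1; apply: Qs.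
Qed.

Lemma stepS k : (k < T)%N -> S k - S k.+1 <= 8 * Num.sqrt (n%:R) * Fc.
Proof.
move=> Hk.
have -> : S k - S k.+1 = \sum_(s : 'S_n | fpfb s) \sum_(p | G s p)
     (Ik k s (cj p s) - Ik k.+1 s (cj p s)).
  rewrite /S -sumrB; apply: eq_bigr => s _; by rewrite -sumrB.
apply: (le_trans (y := \sum_(s : 'S_n | fpfb s) \sum_(p | G s p)
     \sum_(x | dq s (cj p s) x) (g k s x + g k (cj p s) x))).
  apply: ler_sum => s _; apply: ler_sum => p _; exact: step.
under eq_bigr => s _ do under eq_bigr => p _ do rewrite big_split.
under eq_bigr => s _ do rewrite big_split.
rewrite big_split /=.
rewrite (sym_sum (fun u v p => \sum_(x | dq u v x) g k v x)) /=.
under [X in _ + X <= _]eq_bigr => s _ do under eq_bigr => p _ do under eq_bigr => x _ do [].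
have E : \sum_(s : 'S_n | fpfb s) \sum_(p | G s p) \sum_(x | dq (cj p s) s x) g k s x
       = \sum_(s : 'S_n | fpfb s) \sum_(p | G s p) \sum_(x | dq s (cj p s) x) g k s x.
  apply: eq_bigr => s _; apply: eq_bigr => p _; apply: eq_bigl => x; exact: dq_sym.
rewrite E.
have := Qall (ltnW Hk); lra.
Qed.

Lemma chain k : (k <= T)%N -> S 0 - S k <= k%:R * (8 * Num.sqrt (n%:R) * Fc).
Proof.
elim: k => [|k IH] Hk; first by rewrite subrr mul0r.
have := IH (ltnW Hk); have := stepS Hk.
rewrite -natr1 mulrDl mul1r.
move: (S 0) (S k) (S k.+1) (k%:R * (8 * Num.sqrt (n%:R) * Fc)) => a b c d; lra.
Qed.

Lemma Rlow k0 : n = k0.*2 -> ((n * k0 - n)%N)%:R * Fc <= Rsz.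
Proof.
move=> Hn; rewrite /Fc /Rsz mulr_sumr; apply: ler_sum => s Fs.
have -> : \sum_(p | G s p) (1 : RR) = (\sum_(p | G s p) 1)%N%:R by rewrite natr_sum.
rewrite mulr1 ler_nat; exact: Gcount.
Qed.

Lemma Fc_ge1 k0 : n = k0.*2 -> (0 < k0)%N -> 1 <= Fc.
Proof.
move=> Hn k0p; have [s0 Fs0] := fpf_exists Hn k0p.
rewrite /Fc (bigD1 s0) //= lerDl; apply: sumr_ge0 => *; exact: ler01.
Qed.

Lemma key k0 : n = k0.*2 -> (0 < k0)%N ->
  ((n * k0 - n)%N)%:R / 18 <= T%:R * (8 * Num.sqrt (n%:R : RR)).
Proof.
move=> Hn k0p.
have F1 := Fc_ge1 Hn k0p.
have R1 := Rlow Hn.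
have C1 := chain (leqnn T).
rewrite S0 in C1; have ST' := ST.
have r0 := sqrtn_gt0.
set r := Num.sqrt (n%:R : RR) in r0 C1 *.
set c := ((n * k0 - n)%N)%:R in R1 *.
have c0 : 0 <= c by rewrite ler0n.
set t := T%:R in C1 *.
have t0 : 0 <= t by rewrite ler0n.
move: (S T) Rsz Fc F1 R1 C1 ST' => ST Rs F F1 R1 C1 ST'.
have H : c * F / 18 <= t * (8 * r) * F by nra.
have : (c / 18 - t * (8 * r)) * F <= 0 by nra.
rewrite pmulr_lle0; first by lra.
lra.
Qed.
End Main.

Theorem lemma11 :
  exists c : RR, 0 < c /\
  exists N0 : nat,
  forall n : nat, ~~ odd n -> (N0 <= n)%N ->
  forall (m T : nat) (U : nat -> op (basis n m)) (psi0 : state (basis n m))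
         (out : basis n m -> {ffun 'I_n -> bool}),
    (forall k, (k <= T)%N -> unitary (U k)) ->
    normalized psi0 ->
    (forall s : 'S_n, fpf_involution s ->
       2%:R / 3%:R <= success_prob T U psi0 out s) ->
    c * n%:R * Num.sqrt (n%:R) <= T%:R.
Proof.
exists (1 / 576); split; first lra.
exists 4%N => n Hodd H4 m T U psi0 out HU Hpsi Hs.
set k0 := n./2.
have Hn : n = k0.*2 by have := odd_double_half n; rewrite (negPf Hodd) add0n.
have k0p : (1 < k0)%N by rewrite Hn -muln2 in H4; lia.
have Hn0 : (0 < n)%N by lia.
have K := key HU Hpsi Hn0 Hs Hn (ltnW k0p).
have Hle : (n <= n * k0)%N by rewrite leq_pmulr // ltnW.
rewrite natrB // natrM in K.
pose r := Num.sqrt (n%:R : RR).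
have K' : ((n%:R * k0%:R - n%:R) / 18 : RR) <= T%:R * (8 * r) by exact: K.
have rn : r * r = n%:R by rewrite -expr2 sqr_sqrtr // ler0n.
have rp : 0 < r by rewrite sqrtr_gt0 ltr0n.
have NK : (n%:R : RR) = 2 * k0%:R by rewrite Hn -muln2 natrM mulrC.
have K2 : (2 : RR) <= k0%:R by rewrite (ler_nat RR 2 k0).
suff h : r * r * r <= 576 * T%:R.
  change ((1 / 576 : RR) * n%:R * r <= T%:R).
  rewrite -rn; lra.
move: K' rn rp NK K2; clearbody r; clear K.
move: (n%:R : RR) (k0%:R : RR) (T%:R : RR) => N k t.
move=> K rn rp NK K2.
have hk : 0 <= (k - 2) * k by apply: mulr_ge0; lra.
have h1 : N * N / 72 <= 8 * t * r.
  rewrite NK; rewrite NK in K; lra.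
have h2 : r * (r * r * r) <= r * (576 * t) by rewrite -rn in h1; lra.
by rewrite ler_pM2l in h2.
Qed.
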